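(* There is no $4$-$\gamma_t$-critical graph $G$ of order $\Delta(G)+4$ with $\Delta(G)\in\{3,5,7\}$ and $\delta(G)\ge 2$.
   Context: All graphs are finite and simple; $\Delta(G)$, $\delta(G)$ are maximum and minimum degree. A set $S\subseteq V(G)$ is a total dominating set if every vertex of $G$ is adjacent to some vertex of $S$; $\gamma_t(G)$ is the minimum size of such a set. A leaf is a vertex of degree one. A graph $G$ with no isolated vertex is $\gamma_t$-critical if for every vertex $v$ not adjacent to a leaf, $\gamma_t(G-v)<\gamma_t(G)$; it is $m$-$\gamma_t$-critical if moreover $\gamma_t(G)=m$. *)

(* Defs.v *)
From mathcomp Require Import all_boot.
Set Implicit Arguments. Unset Strict Implicit. Unset Printing Implicit Defensive.

Definition simple_graph (T : finType) (e : rel T) : Prop :=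
  symmetric e /\ irreflexive e.

Definition deg (T : finType) (e : rel T) (v : T) : nat := #|[set u | e v u]|.

Definition maxdeg (T : finType) (e : rel T) : nat := \max_(v : T) deg e v.

Definition mindeg (T : finType) (e : rel T) : nat :=
  \big[minn/#|T|]_(v : T) deg e v.

Definition is_leaf (T : finType) (e : rel T) (v : T) : bool := deg e v == 1.

Definition is_tds (T : finType) (e : rel T) (V S : {set T}) : bool :=
  (S \subset V) && [forall x in V, exists y in S, e x y].

Definition gammat_on (T : finType) (e : rel T) (V : {set T}) : nat :=
  \big[minn/#|T|.+1]_(S : {set T} | is_tds e V S) #|S|.

Definition gammat (T : finType) (e : rel T) : nat := gammat_on e setT.

Definition no_isolated (T : finType) (e : rel T) : Prop :=
  forall v : T, 0 < deg e v.

Definition gammat_critical (T : finType) (e : rel T) : Prop :=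
  no_isolated e /\
  forall v : T, ~~ [exists u, e v u && is_leaf e u] ->
    gammat_on e (setT :\ v) < gammat e.

Definition m_gammat_critical (m : nat) (T : finType) (e : rel T) : Prop :=
  gammat_critical e /\ gammat e = m.

(* Main.v *)
Require Import Defs.
From mathcomp Require Import all_boot.
Set Implicit Arguments. Unset Strict Implicit. Unset Printing Implicit Defensive.


Section Red.
Variables (T : finType) (e : rel T).
Hypothesis esy : symmetric e.
Hypothesis eirr : irreflexive e.

Definition DOM (X Y : {set T}) := forall x y, x \in X -> y \in Y ->
  exists u, [/\ u \in X, ~~ e u x & ~~ e u y].
Definition UP (X Y : {set T}) := forall y, y \in Y -> exists w q,
  [/\ w \in X, q \in Y, e w q & forall u, u \in Y -> (~~ e u q && ~~ e u w) = (u == y)].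

Lemma three_in (S : {set T}) a b d : #|S| <= 3 -> a \in S -> b \in S -> d \in S ->
  a != b -> a != d -> b != d -> forall s, s \in S -> [\/ s = a, s = b | s = d].
Proof.
move=> hS ha hb hd ab ad bd s hs.
have sub : a |: (b |: [set d]) \subset S by apply/subsetP=> u; rewrite !inE => /orP [|/orP []] /eqP ->.
have c3 : #|a |: (b |: [set d])| = 3.
  rewrite !cardsU1 cards1 !inE (negbTE bd) (negbTE ab) (negbTE ad) //.
have := eqEcard (a |: (b |: [set d])) S; rewrite sub c3 hS => /eqP E.
by move: hs; rewrite -E !inE => /orP [|/orP []] /eqP ->; [apply: Or31|apply: Or32|apply: Or33].
Qed.

Lemma card3P (A : {set T}) : #|A| = 3 -> exists a b d,
  [/\ a != b, a != d, b != d & forall u, u \in A = [|| u == a, u == b | u == d]].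
Proof.
move=> h.
have : 0 < #|A| by rewrite h.
case/card_gt0P=> a ha.
have h2 : #|A :\ a| == 2 by move: h; rewrite (cardsD1 a A) ha add1n => /eqP.
case/cards2P: h2 => b [d [bd E]].
have hb : b \in A :\ a by rewrite E !inE eqxx.
have hd : d \in A :\ a by rewrite E !inE eqxx orbT.
move: hb hd; rewrite !inE => /andP [ba _] /andP [da _].
exists a, b, d; split; rewrite ?(eq_sym a) //.
move=> u; case: (eqVneq u a) => [->|ua]; first by rewrite ha.

have : (u \in A :\ a) = (u \in A) by rewrite !inE ua.
by move=> <-; rewrite E !inE.
Qed.


Definition Wset (Y : {set T}) (x : T) : {set T} :=
  [set y in Y | [exists q in Y, e x q && [forall u in Y, (~~ e u q && ~~ e u x) == (u == y)]]].

Lemma W_bound (Y : {set T}) x : 2 * #|Wset Y x| <= #|Y|.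
Proof.
set W := Wset Y x.
set E := [set u in Y | ~~ e u x].
pose f q := odflt q [pick u in Y | ~~ e u q && ~~ e u x].
have WY : W \subset Y by apply/subsetP=> y; rewrite inE => /andP[].
have WE : W \subset E.
  apply/subsetP=> y; rewrite !inE => /andP [yY /existsP [q /and3P [qY _ /forallP h]]].
  move: (h y); rewrite yY eqxx /= => /eqP /andP [_ ->]; by rewrite ?yY ?andbT.
have Wf : W \subset f @: (Y :\: E).
  apply/subsetP=> y; rewrite inE => /andP [yY /existsP [q /and3P [qY exq /forallP h]]].
  have -> : y = f q.
    rewrite /f; case: pickP => [u /andP [uY hu]|none].
      by move: (h u); rewrite uY hu /= => /eqP /esym /eqP ->.
    move: (h y) (none y); rewrite yY eqxx /= => /eqP -> //.
  apply: imset_f; rewrite !inE qY (esy q x) exq //.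
have h1 : #|W| <= #|Y :\: E| := leq_trans (subset_leq_card Wf) (leq_imset_card _ _).
have h2 : #|Y :\: E| <= #|Y :\: W| := subset_leq_card (setDS _ WE).
have h3 : #|W| <= #|Y| - #|W| by rewrite -(cardsDS WY); exact: leq_trans h1 h2.
by rewrite mul2n -addnn -leq_subRL // subset_leq_card.
Qed.

Lemma W_cover (X Y : {set T}) : UP X Y -> forall y, y \in Y -> exists2 x, x \in X & y \in Wset Y x.
Proof.
move=> hU y yY; have [w [q [wX qY ewq h]]] := hU y yY.
exists w => //; rewrite inE yY; apply/existsP; exists q; rewrite qY ewq /=.
by apply/forallP=> u; apply/implyP=> uY; rewrite h.
Qed.

Lemma small_case (X Y : {set T}) : #|X| <= 2 -> 2 <= #|Y| -> (#|X| = 2 -> odd #|Y|) -> UP X Y -> False.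
Proof.
move=> hX hY hodd hU.
have [y yY] : exists y, y \in Y by apply/card_gt0P; exact: leq_trans hY.
move: hX; rewrite leq_eqVlt ltnS leq_eqVlt ltnS leqn0 => /orP [/eqP h2|/orP [/eqP h1|/eqP h0]].
- case/cards2P: (introT eqP h2) => x1 [x2 [_ EX]].
  have cov : Y \subset Wset Y x1 :|: Wset Y x2.
    apply/subsetP=> z zY; have [x xX hz] := W_cover hU zY.
    rewrite EX !inE in xX; case/orP: xX => /eqP xe; subst x; by rewrite in_setU hz ?orbT.
  have c := leq_trans (subset_leq_card cov) (leq_card_setU _ _).
  have b1 := W_bound Y x1; have b2 := W_bound Y x2.
  have := hodd h2; move: c b1 b2.
  set a := #|Wset Y x1|; set b := #|Wset Y x2|; set n := #|Y|.
  move=> c b1 b2.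
  have ea : n = a.*2.
    apply/eqP; rewrite eqn_leq -mul2n b1 andbT mul2n.
    have h : n.*2 <= a.*2 + b.*2 by rewrite -doubleD leq_double.
    have h' : a.*2 + b.*2 <= a.*2 + n by rewrite leq_add2l -mul2n.
    by move: (leq_trans h h'); rewrite -addnn leq_add2r.
  by rewrite ea odd_double.
- case/cards1P: (introT eqP h1) => x EX.
  have cov : Y \subset Wset Y x.
    apply/subsetP=> z zY; have [x' xX hz] := W_cover hU zY.
    by move: xX hz; rewrite EX !inE => /eqP ->.
  have c := subset_leq_card cov; have b1 := W_bound Y x.
  have : 2 * #|Y| <= #|Y| := leq_trans (leq_mul (leqnn 2) c) b1.
  by rewrite mul2n -addnn -{3}[#|Y|]add0n leq_add2r leqn0 => /eqP h; rewrite h in hY.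
- have [w [q [wX _ _ _]]] := hU y yY.
  by move: h0 => /eqP; rewrite cards_eq0 => /eqP h; rewrite h inE in wX.
Qed.


Lemma third (X : {set T}) x q : #|X| = 3 -> x \in X -> q \in X -> q != x ->
  exists r, [/\ r \in X, r != x, r != q & forall u, u \in X -> [\/ u = x, u = q | u = r]].
Proof.
move=> h3 xX qX qx.
have h1 : #|X :\ x :\ q| == 1.
  move: h3; rewrite (cardsD1 x X) xX (cardsD1 q (X :\ x)) !inE qx qX /=.
  by rewrite !add1n => -[->].
case/cards1P: h1 => r E.
have : r \in X :\ x :\ q by rewrite E inE.
rewrite !inE => /and3P [rq rx rX].
exists r; split => // u uX.
case: (eqVneq u x) => [->|ux]; first by apply: Or31.
case: (eqVneq u q) => [->|uq]; first by apply: Or32.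
have : u \in X :\ x :\ q by rewrite !inE ux uq uX.
by rewrite E inE => /eqP ->; apply: Or33.
Qed.

Lemma step1 (X Y : {set T}) : #|X| = 3 -> DOM X Y -> UP Y X ->
  forall x, x \in X -> exists2 z, z \in Y & forall u, u \in X -> (~~ e u z) = (u == x).
Proof.
move=> h3 hD hU x xX.
have [z [q [zY qX ezq H]]] := hU x xX.
have qx : q != x.
  by move: (H q qX); rewrite eirr (esy q z) ezq /= => /esym /negbT.
have /andP [nxq nxz] : ~~ e x q && ~~ e x z by rewrite H // eqxx.
have [r [rX rx rq memX]] := third h3 xX qX qx.
have nrq : ~~ e r q.
  apply/negP => erq.
  have [z' [q' [z'Y q'X ez'q' H']]] := hU r rX.
  move: (H' r rX); rewrite eqxx => /andP [nrq' nrz'].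
  have nrx : ~~ e r x.
    case: (memX q' q'X) => e1; subst q' => //.
      by rewrite erq in nrq'.
    by rewrite (esy r z') ez'q' in nrz'.
  have [z'' [q'' [z''Y q''X ez''q'' H'']]] := hU q qX.
  move: (H'' q qX); rewrite eqxx => /andP [nqq'' nqz''].
  case: (memX q'' q''X) => e1; subst q''.
  - move: (H'' r rX); rewrite (negbTE rq) nrx /= => /negbFE erz''.
    have [u [uX nur nuz'']] := hD r z'' rX z''Y.
    case: (memX u uX) => e2; subst u.
    + by rewrite (esy x z'') ez''q'' in nuz''.
    + by rewrite (esy q r) erq in nur.
    + by rewrite erz'' in nuz''.
  - by rewrite (esy q z'') ez''q'' in nqz''.
  - by rewrite (esy q r) erq in nqq''.
exists z => // u uX.
case: (memX u uX) => e1; subst u.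
- by rewrite nxz eqxx.
- by rewrite (esy q z) ezq (negbTE qx).
- by move: (H r rX); rewrite nrq (negbTE rx) /= => ->.
Qed.


Lemma core2 (X Y : {set T}) x1 xj xk z1 zj zk t :
  (forall u, u \in X -> [\/ u = x1, u = xj | u = xk]) ->
  (forall u, u \in Y -> [\/ u = z1, u = zj, u = zk | u = t]) ->
  (forall u, u \in X -> (~~ e u z1) = (u == x1)) ->
  (forall u, u \in X -> (~~ e u zj) = (u == xj)) ->
  (forall u, u \in X -> (~~ e u zk) = (u == xk)) ->
  x1 \in X -> xj \in X -> xk \in X -> z1 \in Y -> zj \in Y -> zk \in Y -> t \in Y ->
  x1 != xj -> x1 != xk -> xj != xk -> t != z1 -> t != zj ->
  (forall u, u \in Y -> (~~ e u zj && ~~ e u x1) = (u == z1)) ->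
  (forall u, u \in Y -> (~~ e u zk && ~~ e u x1) = (u == t)) ->
  DOM Y X -> UP X Y -> False.
Proof.
move=> memX memY Hz1 Hzj Hzk x1X xjX xkX z1Y zjY zkY tY d1j d1k djk tz1 tzj H1 Ht hD hU.
have nz1x1 : ~~ e z1 x1 by rewrite esy Hz1 // eqxx.
have ez1xj : e z1 xj by rewrite esy; apply/negbFE; rewrite Hz1 // eq_sym (negbTE d1j).
have ez1xk : e z1 xk by rewrite esy; apply/negbFE; rewrite Hz1 // eq_sym (negbTE d1k).
have nzjxj : ~~ e zj xj by rewrite esy Hzj // eqxx.
have ezjx1 : e zj x1 by rewrite esy; apply/negbFE; rewrite Hzj // (negbTE d1j).
have ezjxk : e zj xk by rewrite esy; apply/negbFE; rewrite Hzj // eq_sym (negbTE djk).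
have ezkxj : e zk xj by rewrite esy; apply/negbFE; rewrite Hzk // (negbTE djk).
move: (Ht z1 z1Y); rewrite nz1x1 andbT eq_sym (negbTE tz1) => /negbFE ez1zk.
move: (Ht t tY); rewrite eqxx => /andP [ntzk ntx1].
move: (H1 t tY); rewrite ntx1 andbT (negbTE tz1) => /negbFE etzj.
have ntz1 : ~~ e t z1.
  have [u [uY nuz1 nuxk]] := hD z1 xk z1Y xkX.
  case: (memY u uY) => e1; subst u.
  - by rewrite ez1xk in nuxk.
  - by rewrite ezjxk in nuxk.
  - by rewrite esy ez1zk in nuz1.
  - done.
have ntxj : ~~ e t xj.
  have [u [uY nut nuxj]] := hD t xj tY xjX.
  case: (memY u uY) => e1; subst u.
  - by rewrite ez1xj in nuxj.
  - by rewrite esy etzj in nut.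
  - by rewrite ezkxj in nuxj.
  - done.
have [w [q [wX qY ewq H]]] := hU zj zjY.
move: (H zj zjY); rewrite eqxx => /andP [_ nzjw].
have ew : w = xj.
  case: (memX w wX) => e1; subst w => //.
  - by rewrite ezjx1 in nzjw.
  - by rewrite ezjxk in nzjw.
subst w.
move: (H t tY); rewrite ntxj andbT (negbTE tzj) => /negbFE etq.
case: (memY q qY) => e1; subst q.
- by rewrite etq in ntz1.
- by rewrite esy ewq in nzjxj.
- by rewrite etq in ntzk.
- by rewrite eirr in etq.
Qed.


Lemma core (X Y : {set T}) x1 x2 x3 z1 z2 z3 t qt :
  (forall u, u \in X -> [\/ u = x1, u = x2 | u = x3]) ->
  (forall u, u \in Y -> [\/ u = z1, u = z2, u = z3 | u = t]) ->
  (forall u, u \in X -> (~~ e u z1) = (u == x1)) ->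
  (forall u, u \in X -> (~~ e u z2) = (u == x2)) ->
  (forall u, u \in X -> (~~ e u z3) = (u == x3)) ->
  x1 \in X -> x2 \in X -> x3 \in X -> z1 \in Y -> z2 \in Y -> z3 \in Y -> t \in Y ->
  x1 != x2 -> x1 != x3 -> x2 != x3 -> t != z1 -> t != z2 -> t != z3 ->
  qt \in Y -> e x1 qt ->
  (forall u, u \in Y -> (~~ e u qt && ~~ e u x1) = (u == t)) ->
  DOM Y X -> UP X Y -> False.
Proof.
move=> memX memY Hz1 Hz2 Hz3 x1X x2X x3X z1Y z2Y z3Y tY d12 d13 d23 tz1 tz2 tz3 qtY ex1qt Ht hD hU.
have nz1x1 : ~~ e z1 x1 by rewrite esy Hz1 // eqxx.
have ez1x2 : e z1 x2 by rewrite esy; apply/negbFE; rewrite Hz1 // eq_sym (negbTE d12).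
have ez1x3 : e z1 x3 by rewrite esy; apply/negbFE; rewrite Hz1 // eq_sym (negbTE d13).
move: (Ht t tY); rewrite eqxx => /andP [_ ntx1].
have [w [q1 [wX q1Y ewq1 H1]]] := hU z1 z1Y.
move: (H1 z1 z1Y); rewrite eqxx => /andP [_ nz1w].
have ew : w = x1.
  case: (memX w wX) => e1; subst w => //.
  - by rewrite ez1x2 in nz1w.
  - by rewrite ez1x3 in nz1w.
subst w.
have q1ne : q1 = z2 \/ q1 = z3.
  case: (memY q1 q1Y) => e1; subst q1; try by [left|right].
  - by rewrite esy ewq1 in nz1x1.
  - by rewrite esy ewq1 in ntx1.
have qtne : qt = z2 \/ qt = z3.
  case: (memY qt qtY) => e1; subst qt; try by [left|right].
  - by rewrite esy ex1qt in nz1x1.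
  - by rewrite esy ex1qt in ntx1.
have nsame : q1 != qt.
  apply/negP => /eqP e1; subst qt.
  by move: (H1 t tY) (Ht t tY); rewrite (negbTE tz1) eqxx => ->.
case: q1ne => e1; case: qtne => e2; subst q1 qt; rewrite ?eqxx // in nsame.
- apply: (@core2 X Y x1 x2 x3 z1 z2 z3 t) => //.
- apply: (@core2 X Y x1 x3 x2 z1 z3 z2 t) => //; rewrite ?(eq_sym x3) //.
  + by move=> u /memX [] ->; [apply: Or31|apply: Or33|apply: Or32].
  + by move=> u /memY [] ->; [apply: Or41|apply: Or43|apply: Or42|apply: Or44].
Qed.

Lemma fourth (Y : {set T}) a b d : #|Y| = 4 -> a \in Y -> b \in Y -> d \in Y ->
  a != b -> a != d -> b != d ->
  exists t, [/\ t \in Y, t != a, t != b, t != d & forall u, u \in Y -> [\/ u = a, u = b, u = d | u = t]].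
Proof.
move=> h4 aY bY dY ab ad bd.
have h1 : #|Y :\ a :\ b :\ d| == 1.
  move: h4; rewrite (cardsD1 a Y) aY (cardsD1 b (Y :\ a)) (cardsD1 d (Y :\ a :\ b)) !inE.
  by rewrite eq_sym ab bY eq_sym bd eq_sym ad dY /= !add1n => -[->].
case/cards1P: h1 => t E.
have : t \in Y :\ a :\ b :\ d by rewrite E inE.
rewrite !inE => /and4P [td tb ta tY].
exists t; split => // u uY.
case: (eqVneq u a) => [->|ua]; first by apply: Or41.
case: (eqVneq u b) => [->|ub]; first by apply: Or42.
case: (eqVneq u d) => [->|ud]; first by apply: Or43.
have : u \in Y :\ a :\ b :\ d by rewrite !inE ua ub ud uY.
by rewrite E inE => /eqP ->; apply: Or44.
Qed.

Lemma case34 (X Y : {set T}) : #|X| = 3 -> #|Y| = 4 -> DOM X Y -> DOM Y X -> UP Y X -> UP X Y -> False.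
Proof.
move=> h3 h4 hDX hDY hUX hUY.
have [x1 [x2 [x3 [d12 d13 d23 EX]]]] := card3P h3.
have memX : forall u, u \in X -> [\/ u = x1, u = x2 | u = x3].
  by move=> u; rewrite EX => /or3P [] /eqP ->; [apply: Or31|apply: Or32|apply: Or33].
have x1X : x1 \in X by rewrite EX eqxx.
have x2X : x2 \in X by rewrite EX eqxx orbT.
have x3X : x3 \in X by rewrite EX eqxx !orbT.
have [z1 z1Y Hz1] := step1 h3 hDX hUX x1X.
have [z2 z2Y Hz2] := step1 h3 hDX hUX x2X.
have [z3 z3Y Hz3] := step1 h3 hDX hUX x3X.
have dz : forall za zb xa xb, xa \in X -> xb \in X -> xa != xb ->
    (forall u, u \in X -> (~~ e u za) = (u == xa)) ->
    (forall u, u \in X -> (~~ e u zb) = (u == xb)) -> za != zb.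
  move=> za zb xa xb xaX xbX dab Ha Hb; apply/negP => /eqP eab; subst zb.
  by move: (Ha xb xbX) (Hb xb xbX); rewrite eqxx eq_sym (negbTE dab) => ->.
have [t [tY tz1 tz2 tz3 memY]] := fourth h4 z1Y z2Y z3Y (dz _ _ _ _ x1X x2X d12 Hz1 Hz2)
  (dz _ _ _ _ x1X x3X d13 Hz1 Hz3) (dz _ _ _ _ x2X x3X d23 Hz2 Hz3).
have [w [qt [wX qtY ewqt Ht]]] := hUY t tY.
case: (memX w wX) => e1; subst w.
- exact: (@core X Y x1 x2 x3 z1 z2 z3 t qt).
- apply: (@core X Y x2 x1 x3 z2 z1 z3 t qt) => //; rewrite ?(eq_sym x2) //.
  + by move=> u /memX [] ->; [apply: Or32|apply: Or31|apply: Or33].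
  + by move=> u /memY [] ->; [apply: Or42|apply: Or41|apply: Or43|apply: Or44].
- apply: (@core X Y x3 x1 x2 z3 z1 z2 t qt) => //; rewrite ?(eq_sym x3) //.
  + by move=> u /memX [] ->; [apply: Or32|apply: Or33|apply: Or31].
  + by move=> u /memY [] ->; [apply: Or42|apply: Or43|apply: Or41|apply: Or44].
Qed.

Lemma arith a b : a <= b -> a + b \in [:: 3;5;7] ->
  (a <= 2 /\ 2 <= b /\ (a = 2 -> odd b)) \/ (a = 3 /\ b = 4).
Proof.
move=> hab hs.
have h7 : a + b <= 7 by move: hs; rewrite !inE => /or3P [] /eqP ->.
have ha : a <= 7 := leq_trans (leq_addr b a) h7.
have hb : b <= 7 := leq_trans (leq_addl a b) h7.
move: hab hs ha hb {h7}.
case: a => [|[|[|[|[|[|[|[|a]]]]]]]]; case: b => [|[|[|[|[|[|[|[|b]]]]]]]] //;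
  by [left; do !split | right].
Qed.

Lemma reduced (X Y : {set T}) : DOM X Y -> DOM Y X -> (2 <= #|X| -> UP Y X) ->
  (2 <= #|Y| -> UP X Y) -> #|X| + #|Y| \in [:: 3; 5; 7] -> False.
Proof.
wlog: X Y / #|X| <= #|Y|.
  move=> H hXY hYX hUX hUY hs; case: (leqP #|X| #|Y|) => h; first exact: (H X Y h).
  by apply: (H Y X (ltnW h)) => //; rewrite addnC.
move=> hle hXY hYX hUX hUY hs.
case: (arith hle hs) => [[h1 [h2 h3]]|[h1 h2]].
- exact: (small_case h1 h2 h3 (hUY h2)).
- by apply: (case34 h1 h2 hXY hYX (hUX _) (hUY _)); rewrite ?h1 ?h2.
Qed.

End Red.


Section Shape.
Variables (T : finType) (e : rel T).
Hypothesis esy : symmetric e.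
Hypothesis eirr : irreflexive e.

Definition COVER3 := forall a b d : T, exists u, [&& ~~ e u a, ~~ e u b & ~~ e u d].
Definition PRIV := forall w : T, exists S : {set T}, [/\ #|S| <= 3,
  forall s, s \in S -> (s != w) && ~~ e w s & forall u, u != w -> exists2 s, s \in S & e u s].

Lemma neqC (x y : T) : x != y -> y != x. Proof. by rewrite eq_sym. Qed.

Section S1.
Variables (v a1 a2 c : T) (P Q : {set T}).
Hypothesis hall : forall u, u = v \/ u \in P \/ u \in Q \/ u = a1 \/ u = a2 \/ u = c.
Hypothesis hPQ : forall x, x \in P -> x \in Q -> False.
Hypothesis Nv : forall u, e v u = (u \in P) || (u \in Q).
Hypothesis N1 : forall u, e a1 u = (u == c) || (u \in Q).
Hypothesis N2 : forall u, e a2 u = (u == c) || (u \in P).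
Hypothesis Nc : forall u, e c u = (u == a1) || (u == a2).
Hypothesis hnot : forall u, u \in P \/ u \in Q -> [/\ u != v, u != a1, u != a2 & u != c].
Hypothesis hdist1 : [/\ v != a1, v != a2 & v != c].
Hypothesis hdist2 : [/\ a1 != a2, a1 != c & a2 != c].
Hypothesis cov : COVER3.
Hypothesis prv : PRIV.

Lemma sDOM : DOM e P Q.
Proof using All.
move=> x y xP yQ.
have [u /and3P [nua1 nux nuy]] := cov a1 x y.
case: (hall u) => [eu|[uP|[uQ|[eu|[eu|eu]]]]]; try subst u.
- by rewrite Nv xP in nux.
- by exists u.
- by rewrite esy N1 uQ orbT in nua1.
- by rewrite N1 yQ orbT in nuy.
- by rewrite N2 xP orbT in nux.
- by rewrite Nc eqxx in nua1.
Qed.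

Lemma sDOMQ : DOM e Q P.
Proof using All.
move=> y x yQ xP.
have [u /and3P [nua2 nuy nux]] := cov a2 y x.
case: (hall u) => [eu|[uP|[uQ|[eu|[eu|eu]]]]]; try subst u.
- by rewrite Nv yQ orbT in nuy.
- by rewrite esy N2 uP orbT in nua2.
- by exists u.
- by rewrite N1 yQ orbT in nuy.
- by rewrite N2 xP orbT in nux.
- by rewrite Nc eqxx orbT in nua2.
Qed.

Lemma sUP : 2 <= #|Q| -> UP e P Q.
Proof using All.
move=> hQ y yQ.
have [nyv nya1 nya2 nyc] := hnot (or_intror yQ).
have [dva1 dva2 dvc] := hdist1.
have [da12 da1c da2c] := hdist2.
have [S [hS Sy cv]] := prv y.
have nQP : forall x, x \in Q -> x \notin P by move=> x xQ; apply/negP => xP; exact: hPQ xP xQ.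
have ea1y : e a1 y by rewrite N1 yQ orbT.
have a2S : a2 \in S.
  have [s sS ecs] : exists2 s, s \in S & e c s by apply: cv; rewrite eq_sym.
  move: ecs; rewrite Nc => /orP [] /eqP es; subst s => //.
  by move: (Sy _ sS); rewrite esy ea1y andbF.
have eua2 : forall u, u \in Q -> e u a2 = false.
  move=> u uQ; rewrite esy N2 (negbTE (nQP u uQ)) orbF.
  by have [_ _ _ h] := hnot (or_intror uQ); apply/negbTE.
have euc : forall u, u \in Q -> e u c = false.
  move=> u uQ; rewrite esy Nc.
  by have [_ h1 h2 _] := hnot (or_intror uQ); rewrite (negbTE h1) (negbTE h2).
case: (boolP (c \in S)) => cS.
- have [s2 s2S evs2] := cv v (neqC nyv).
  have s2PQ : s2 \in P \/ s2 \in Q by move: evs2; rewrite Nv => /orP [] h; [left|right].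
  have [_ _ ns2a2 ns2c] := hnot s2PQ.
  have memS := three_in hS a2S cS s2S da2c (neqC ns2a2) (neqC ns2c).
  have s2P : s2 \in P.
    case: s2PQ => // s2Q.
    have ns2y : s2 != y by case/andP: (Sy _ s2S).
    have [s sS es2s] := cv s2 ns2y.
    case: (memS s sS) => es; subst s.
    + by rewrite eua2 in es2s.
    + by rewrite euc in es2s.
    + by rewrite eirr in es2s.
  have covQ : forall u, u \in Q -> u != y -> e u s2.
    move=> u uQ uy; have [s sS eus] := cv u uy.
    case: (memS s sS) => es; subst s => //.
    + by rewrite eua2 in eus.
    + by rewrite euc in eus.
  have [q qQ qy] : exists2 q, q \in Q & q != y.
    have : 0 < #|Q :\ y| by move: hQ; rewrite (cardsD1 y Q) yQ add1n ltnS.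
    by case/card_gt0P => q; rewrite !inE => /andP [qy qQ]; exists q.
  have nyq : ~~ e y q.
    have [u [uQ nuq nus2]] := sDOMQ qQ s2P.
    case: (eqVneq u y) => [<- //|uy].
    by rewrite covQ in nus2.
  exists s2, q; split => //; first by rewrite esy covQ.
  move=> u uQ; case: (eqVneq u y) => [->|uy].
    by rewrite nyq; case/andP: (Sy _ s2S) => _ ->.
  by rewrite covQ // andbF.
- have [s3 s3S ea1s3] := cv a1 (neqC nya1).
  have s3Q : s3 \in Q.
    by move: ea1s3; rewrite N1 => /orP [/eqP es|//]; subst s3; rewrite s3S in cS.
  have [s4 s4S ea2s4] := cv a2 (neqC nya2).
  have s4P : s4 \in P.
    by move: ea2s4; rewrite N2 => /orP [/eqP es|//]; subst s4; rewrite s4S in cS.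
  have [_ _ ns3a2 _] := hnot (or_intror s3Q).
  have [_ _ ns4a2 _] := hnot (or_introl s4P).
  have d34 : s3 != s4 by apply/negP => /eqP es; subst s4; exact: hPQ s4P s3Q.
  have memS := three_in hS a2S s3S s4S (neqC ns3a2) (neqC ns4a2) d34.
  have covQ : forall u, u \in Q -> u != y -> e u s3 || e u s4.
    move=> u uQ uy; have [s sS eus] := cv u uy.
    case: (memS s sS) => es; subst s; rewrite ?eus ?orbT //.
    by rewrite eua2 in eus.
  have es4s3 : e s4 s3.
    have s3y : s3 != y by case/andP: (Sy _ s3S).
    have [s sS es3s] := cv s3 s3y.
    case: (memS s sS) => es; subst s.
    + by rewrite eua2 in es3s.
    + by rewrite eirr in es3s.
    + by rewrite esy.
  exists s4, s3; split => //.
  move=> u uQ; case: (eqVneq u y) => [->|uy].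
    by case/andP: (Sy _ s3S) => _ ->; case/andP: (Sy _ s4S) => _ ->.
  by move: (covQ u uQ uy) => /orP [] ->; rewrite ?andbF.
Qed.

End S1.

Lemma shape_false (v a1 a2 c : T) (P Q : {set T}) :
  (forall u, u = v \/ u \in P \/ u \in Q \/ u = a1 \/ u = a2 \/ u = c) ->
  (forall x, x \in P -> x \in Q -> False) ->
  (forall u, e v u = (u \in P) || (u \in Q)) ->
  (forall u, e a1 u = (u == c) || (u \in Q)) ->
  (forall u, e a2 u = (u == c) || (u \in P)) ->
  (forall u, e c u = (u == a1) || (u == a2)) ->
  (forall u, u \in P \/ u \in Q -> [/\ u != v, u != a1, u != a2 & u != c]) ->
  [/\ v != a1, v != a2 & v != c] -> [/\ a1 != a2, a1 != c & a2 != c] ->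
  COVER3 -> PRIV -> #|P| + #|Q| \in [:: 3; 5; 7] -> False.
Proof.
move=> hall hPQ Nv N1 N2 Nc hnot [d1 d2 d3] [d4 d5 d6] cov prv hs.
have hall' : forall u, u = v \/ u \in Q \/ u \in P \/ u = a2 \/ u = a1 \/ u = c.
  by move=> u; case: (hall u); tauto.
have hPQ' : forall x, x \in Q -> x \in P -> False by move=> x h1 h2; exact: hPQ h2 h1.
have Nv' : forall u, e v u = (u \in Q) || (u \in P) by move=> u; rewrite orbC.
have Nc' : forall u, e c u = (u == a2) || (u == a1) by move=> u; rewrite orbC.
have hnot' : forall u, u \in Q \/ u \in P -> [/\ u != v, u != a2, u != a1 & u != c].
  move=> u h; have h' : u \in P \/ u \in Q by tauto.
  by have [] := hnot u h' => *; split.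
have hd1' : [/\ v != a2, v != a1 & v != c] by split.
have hd2' : [/\ a2 != a1, a2 != c & a1 != c] by split; rewrite // eq_sym.
apply: (reduced esy eirr (X := P) (Y := Q)) hs.
- exact: (@sDOM v a1 a2 c P Q hall hPQ Nv N1 N2 Nc hnot (And3 d1 d2 d3) (And3 d4 d5 d6) cov prv).
- exact: (@sDOMQ v a1 a2 c P Q hall hPQ Nv N1 N2 Nc hnot (And3 d1 d2 d3) (And3 d4 d5 d6) cov prv).
- exact: (@sUP v a2 a1 c Q P hall' hPQ' Nv' N2 N1 Nc' hnot' hd1' hd2' cov prv).
- exact: (@sUP v a1 a2 c P Q hall hPQ Nv N1 N2 Nc hnot (And3 d1 d2 d3) (And3 d4 d5 d6) cov prv).
Qed.

End Shape.


Lemma bigmin_le (I : finType) (P : pred I) (F : I -> nat) d i :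
  P i -> \big[minn/d]_(j | P j) F j <= F i.
Proof.
move=> Pi; have : i \in index_enum I := mem_index_enum i.
elim: (index_enum I) => [//|j r IH]; rewrite inE big_cons => /orP [/eqP <-|ir].
  by rewrite Pi geq_minl.
by case: (P j); [exact: leq_trans (geq_minr _ _) (IH ir) | exact: IH].
Qed.

Lemma bigmin_lt (I : finType) (P : pred I) (F : I -> nat) d c :
  \big[minn/d]_(j | P j) F j < c -> c <= d -> exists j, P j && (F j < c).
Proof.
move=> h cd; move: h.
elim: (index_enum I) => [|j r IH]; rewrite ?big_nil ?big_cons.
  by rewrite ltnNge cd.
case Pj: (P j) => //; rewrite gtn_min => /orP [h|h]; last exact: IH.
by exists j; rewrite Pj h.
Qed.

Lemma card3_le (T : finType) (a b d : T) : #|[set a; b; d]| <= 3.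
Proof.
apply: leq_trans (leq_card_setU _ _) _; rewrite cards1 addn1 ltnS.
by apply: leq_trans (leq_card_setU _ _) _; rewrite !cards1.
Qed.

Section Main.
Variables (T : finType) (e : rel T).
Hypothesis esy : symmetric e.
Hypothesis eirr : irreflexive e.
Hypothesis g4 : gammat e = 4.
Hypothesis n4 : 4 <= #|T|.

Lemma tds_big (S : {set T}) : is_tds e setT S -> 4 <= #|S|.
Proof.
move=> h; rewrite -g4 /gammat /gammat_on; exact: (bigmin_le (P := fun S => is_tds e setT S)).
Qed.

Lemma cover3 : COVER3 e.
Proof.
move=> a b d.
case: (boolP [exists u, [&& ~~ e u a, ~~ e u b & ~~ e u d]]) => [/existsP [u hu]|h]; first by exists u.
have : 4 <= #|[set a; b; d]|.
  apply: tds_big; rewrite /is_tds subsetT /=; apply/forallP=> x; apply/implyP=> _.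
  move: h; rewrite negb_exists => /forallP /(_ x); rewrite -!negb_or negbK => /or3P [] hx; apply/existsP.
  - by exists a; rewrite !inE eqxx hx.
  - by exists b; rewrite !inE eqxx orbT hx.
  - by exists d; rewrite !inE eqxx orbT hx.
by rewrite leqNgt ltnS card3_le.
Qed.

Lemma priv_of (w : T) : gammat_on e (setT :\ w) < 4 ->
  exists S : {set T}, [/\ #|S| <= 3,
  forall s, s \in S -> (s != w) && ~~ e w s & forall u, u != w -> exists2 s, s \in S & e u s].
Proof.
move=> h; have [S /andP [hS lt]] := bigmin_lt h (leq_trans n4 (leqnSn _)).
move: hS => /andP [sub /forallP cv].
have cv' : forall u, u != w -> exists2 s, s \in S & e u s.
  by move=> u uw; move: (cv u); rewrite !inE uw /= => /existsP [s /andP [sS eus]]; exists s.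
exists S; split => //.
move=> s sS; move/subsetP: sub => /(_ s sS); rewrite !inE andbT => -> /=.
apply/negP => ews.
have : 4 <= #|S|.
  apply: tds_big; rewrite /is_tds subsetT /=; apply/forallP=> x; apply/implyP=> _.
  case: (eqVneq x w) => [->|xw]; first by apply/existsP; exists s; rewrite sS ews.
  by have [s' s'S exs'] := cv' x xw; apply/existsP; exists s'; rewrite s'S exs'.
by rewrite leqNgt lt.
Qed.

End Main.

Section Center.
Variables (T : finType) (e : rel T).
Hypothesis esy : symmetric e.
Hypothesis eirr : irreflexive e.

Lemma center_case (v0 a1 a2 c : T) :
  (forall u, u = v0 \/ e v0 u \/ u = a1 \/ u = a2 \/ u = c) ->
  ~~ e v0 a1 -> ~~ e v0 a2 -> ~~ e v0 c -> v0 != a1 -> v0 != a2 -> v0 != c ->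
  a1 != a2 -> a1 != c -> a2 != c ->
  e c a1 -> e c a2 -> ~~ e a1 a2 ->
  (forall u, u != v0 -> [|| e u a1, e u a2 | e u c]) ->
  COVER3 e -> PRIV e -> #|[set u | e v0 u]| \in [:: 3; 5; 7] -> False.
Proof.
move=> hT nv1 nv2 nvc dv1 dv2 dvc d12 d1c d2c ec1 ec2 n12 star cov prv hs.
have s1 : forall x, e v0 x -> ~~ e c x.
  move=> x ex; have [u /and3P [nuv nuc nux]] := cov v0 c x.
  case: (hT u) => [eu|[evu|[eu|[eu|eu]]]]; try subst u.
  - by rewrite ex in nux.
  - by rewrite esy evu in nuv.
  - by rewrite esy ec1 in nuc.
  - by rewrite esy ec2 in nuc.
  - done.
have s2 : forall x, e v0 x -> e a1 x || e a2 x.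
  move=> x ex; have xv : x != v0 by apply/negP => /eqP ex'; subst x; rewrite eirr in ex.
  by have := star x xv; rewrite (esy x a1) (esy x a2) (esy x c) (negbTE (s1 x ex)) orbF.
have s3 : forall x, e v0 x -> ~~ e a1 x || ~~ e a2 x.
  move=> x ex; have [u /and3P [nuv nu1 nux]] := cov v0 a1 x.
  case: (hT u) => [eu|[evu|[eu|[eu|eu]]]]; try subst u.
  - by rewrite ex in nux.
  - by rewrite esy evu in nuv.
  - by rewrite nux.
  - by rewrite nux orbT.
  - by rewrite ec1 in nu1.
set P := [set x | e v0 x && e a2 x].
set Q := [set x | e v0 x && e a1 x].
have e1v : e a1 v0 = false by rewrite esy (negbTE nv1).
have e2v : e a2 v0 = false by rewrite esy (negbTE nv2).
have ecv : e c v0 = false by rewrite esy (negbTE nvc).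
apply: (@shape_false T e esy eirr v0 a1 a2 c P Q) => //.
- move=> u; case: (hT u) => [eu|[evu|[eu|[eu|eu]]]]; try tauto.
  move: (s2 u evu) => /orP [h|h]; [right; right; left | right; left]; by rewrite !inE evu h.
- move=> x; rewrite !inE => /andP [ex h2] /andP [_ h1].
  by move: (s3 x ex); rewrite h1 h2.
- move=> u; rewrite !inE; case evu: (e v0 u) => //=; by rewrite orbC s2.
- move=> u; rewrite !inE; case: (hT u) => [eu|[evu|[eu|[eu|eu]]]]; try subst u.
  + by rewrite e1v eirr (negbTE dvc).
  + have uc : (u == c) = false by apply/negbTE; apply/negP => /eqP eu; subst u; rewrite evu in nvc.
    by rewrite uc evu.
  + by rewrite eirr (negbTE d1c) (negbTE nv1).
  + by rewrite (negbTE n12) (negbTE d2c) (negbTE nv2).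
  + by rewrite esy ec1 eqxx.
- move=> u; rewrite !inE; case: (hT u) => [eu|[evu|[eu|[eu|eu]]]]; try subst u.
  + by rewrite e2v eirr (negbTE dvc).
  + have uc : (u == c) = false by apply/negbTE; apply/negP => /eqP eu; subst u; rewrite evu in nvc.
    by rewrite uc evu.
  + by rewrite esy (negbTE n12) (negbTE d1c) (negbTE nv1).
  + by rewrite eirr (negbTE d2c) (negbTE nv2).
  + by rewrite esy ec2 eqxx.
- move=> u; case: (hT u) => [eu|[evu|[eu|[eu|eu]]]]; try subst u.
  + by rewrite ecv (negbTE dv1) (negbTE dv2).
  + rewrite (negbTE (s1 u evu)).
    have u1 : (u == a1) = false by apply/negbTE; apply/negP => /eqP eu; subst u; rewrite evu in nv1.
    have u2 : (u == a2) = false by apply/negbTE; apply/negP => /eqP eu; subst u; rewrite evu in nv2.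
    by rewrite u1 u2.
  + by rewrite ec1 eqxx.
  + by rewrite ec2 eqxx orbT.
  + by rewrite eirr eq_sym (negbTE d1c) eq_sym (negbTE d2c).
- move=> u huPQ.
  have evu : e v0 u by case: huPQ; rewrite !inE => /andP [].
  split; apply/negP => /eqP eu; subst u.
  + by rewrite eirr in evu.
  + by rewrite evu in nv1.
  + by rewrite evu in nv2.
  + by rewrite evu in nvc.
all: try by split.
have -> : #|P| + #|Q| = #|[set u | e v0 u]|.
  rewrite -cardsUI.
  have -> : P :&: Q = set0.
    apply/setP => x; rewrite !inE; apply/negP => /andP [/andP [ex h2] /andP [_ h1]].
    by move: (s3 x ex); rewrite h1 h2.
  rewrite cards0 addn0; apply: eq_card => x; rewrite !inE.
  by case ex: (e v0 x) => //=; rewrite orbC s2.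
done.
Qed.

End Center.

Unset Implicit Arguments.

Theorem mainTheorem5 (T : finType) (e : rel T) :
  simple_graph e ->
  m_gammat_critical 4 e ->
  maxdeg e \in [:: 3; 5; 7] ->
  2 <= mindeg e ->
  #|T| <> maxdeg e + 4.
Proof.
move=> [esy eirr] [[noiso crit] g4] hD hm hn.
have hdeg2 : forall v, 2 <= deg e v.
  move=> v; apply: leq_trans hm _; exact: (bigmin_le (P := xpredT)).
have n4 : 4 <= #|T| by rewrite hn leq_addl.
have prv : PRIV e.
  move=> w; apply: (priv_of g4 n4); rewrite -g4; apply: crit.
  apply/existsP => -[u /andP [_ /eqP h1]].
  by have := hdeg2 u; rewrite h1.
have cov : COVER3 e := cover3 g4.
have [v0 hv0] := eq_bigmax (deg e) (leq_trans (isT : 0 < 4) n4).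
set Nv := [set u | e v0 u].
have cNv : #|Nv| = maxdeg e by rewrite /maxdeg hv0.
set A := [set u | (u != v0) && ~~ e v0 u].
have cA : #|A| = 3.
  have hC : ~: A = v0 |: Nv by apply/setP => u; rewrite !inE negb_and !negbK.
  have := cardsC A; rewrite hC cardsU1 !inE eirr cNv hn add1n.
  rewrite (_ : maxdeg e + 4 = 3 + (maxdeg e).+1); last by rewrite !addnS addnC.
  by move=> /eqP; rewrite eqn_add2r => /eqP.
have [a [b [d [dab dad dbd memA]]]] := card3P cA.
have aA : a \in A by rewrite memA eqxx.
have bA : b \in A by rewrite memA eqxx orbT.
have dA : d \in A by rewrite memA eqxx !orbT.
move: aA bA dA; rewrite !inE => /andP [av nva] /andP [bv nvb] /andP [dv nvd].
have hT : forall u, u = v0 \/ e v0 u \/ u = a \/ u = b \/ u = d.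
  move=> u; case: (eqVneq u v0) => [->|uv]; first by left.
  case evu: (e v0 u); first by right; left.
  have : u \in A by rewrite inE uv evu.
  by rewrite memA => /or3P [] /eqP ->; tauto.
have [S0 [_ S0v cv0]] := prv v0.
have star : forall u, u != v0 -> [|| e u a, e u b | e u d].
  move=> u uv; have [s sS eus] := cv0 u uv.
  have : s \in A by rewrite inE; exact: S0v.
  by rewrite memA => /or3P [] /eqP es; subst s; rewrite eus ?orbT.
have [x0 x0N] : exists x0, x0 \in Nv.
  by apply/card_gt0P; rewrite cNv; move: hD; rewrite !inE => /or3P [] /eqP ->.
have ex0 : e v0 x0 by move: x0N; rewrite inE.
have x0v : x0 != v0 by apply/negP => /eqP h; subst x0; rewrite eirr in ex0.
have hsz : #|[set u | e v0 u]| \in [:: 3; 5; 7] by rewrite -/Nv cNv.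
have nx0 : forall i j k, (forall u, u = v0 \/ e v0 u \/ u = i \/ u = j \/ u = k) ->
    ~~ e v0 i -> e j i -> e k i -> ~~ e i x0.
  move=> i j k hT' nvi eji eki.
  have [u /and3P [nuv nui nux]] := cov v0 i x0.
  case: (hT' u) => [eu|[evu|[eu|[eu|eu]]]]; try subst u.
  - by rewrite ex0 in nux.
  - by rewrite esy evu in nuv.
  - done.
  - by rewrite eji in nui.
  - by rewrite eki in nui.
have perm : forall i j k, (forall u, u = v0 \/ e v0 u \/ u = i \/ u = j \/ u = k) ->
    forall u, u = v0 \/ e v0 u \/ u = j \/ u = i \/ u = k.
  by move=> i j k h u; case: (h u); tauto.
have perm2 : forall i j k, (forall u, u = v0 \/ e v0 u \/ u = i \/ u = j \/ u = k) ->
    forall u, u = v0 \/ e v0 u \/ u = i \/ u = k \/ u = j.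
  by move=> i j k h u; case: (h u); tauto.
have nva' := neqC av; have nvb' := neqC bv; have nvd' := neqC dv.
have iso : forall i, i != v0 -> e i a = false -> e i b = false -> e i d = false -> False.
  by move=> i iv h1 h2 h3; move: (star i iv); rewrite h1 h2 h3.
case eab: (e a b); case ead: (e a d); case ebd: (e b d).
- have h1 := nx0 a b d hT nva ltac:(by rewrite esy) ltac:(by rewrite esy).
  have h2 := nx0 b a d (perm _ _ _ hT) nvb eab ltac:(by rewrite esy).
  have h3 := nx0 d a b (perm _ _ _ (perm2 _ _ _ hT)) nvd ead ebd.
  by move: (star x0 x0v); rewrite !(esy x0) (negbTE h1) (negbTE h2) (negbTE h3).
- apply: (center_case esy eirr (v0 := v0) (a1 := b) (a2 := d) (c := a)); rewrite ?ead ?eab ?ebd //;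
  try exact: neqC; try (by rewrite esy); try (by move=> u; case: (hT u); tauto);
  try (by move=> u /star; case: (e u a); case: (e u b); case: (e u d)).
- apply: (center_case esy eirr (v0 := v0) (a1 := a) (a2 := d) (c := b)); rewrite ?ead ?eab ?ebd //;
  try exact: neqC; try (by rewrite esy); try (by move=> u; case: (hT u); tauto);
  try (by move=> u /star; case: (e u a); case: (e u b); case: (e u d)).
- by apply: (iso d dv); rewrite ?eirr // esy.
- apply: (center_case esy eirr (v0 := v0) (a1 := a) (a2 := b) (c := d)); rewrite ?ead ?eab ?ebd //;
  try exact: neqC; try (by rewrite esy); try (by move=> u; case: (hT u); tauto);
  try (by move=> u /star; case: (e u a); case: (e u b); case: (e u d)).
- by apply: (iso b bv); rewrite ?eirr // esy.
- by apply: (iso a av); rewrite ?eirr.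
- by apply: (iso a av); rewrite ?eirr.
Qed.
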